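(* Let $u(t,x)$ be a smooth function of $t$ and of $x\in S^1=\mathbb{R}/\mathbb{Z}\simeq[0,1)$, and consider the linear system $$\psi_{xxx}=-\lambda\, m\,\psi,\qquad \psi_t=-\tfrac{1}{\lambda}\psi_{xx}-u\psi_x+u_x\psi,$$ where $\lambda\in\mathbb{C}\setminus\{0\}$ is a spectral parameter and $\psi(t,x)$ is a scalar eigenfunction. (i) If $m=\mu(u)-u_{xx}$, then the compatibility condition $(\psi_t)_{xxx}=(\psi_{xxx})_t$ of this system is equivalent to $u$ satisfying the $\mu$DP equation $$\mu(u_t)-u_{txx}+3\mu(u)u_x-3u_xu_{xx}-uu_{xxx}=0.$$ (ii) If $m=-u_{xx}$, then the compatibility condition $(\psi_t)_{xxx}=(\psi_{xxx})_t$ is equivalent to $u$ satisfying the $\mu$B equation $$-u_{txx}-3u_xu_{xx}-uu_{xxx}=0.$$ Thus both the $\mu$DP and the $\mu$B equations admit this Lax pair formulation.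
   Context: Here $\mu(u)=\int_0^1 u\,dx$ denotes the mean of a periodic function. Both equations are instances of $Au_t+3u_xAu+uAu_x=0$, i.e. $m_t=-um_x-3u_xm$ with $m=Au$, where $A=\mu-\partial_x^2$ for $\mu$DP and $A=-\partial_x^2$ for $\mu$B. *)

(* Defs.v *)
From Stdlib Require Import Reals List.
From Coquelicot Require Import Coquelicot.
Open Scope R_scope.

Definition dt (u : R -> R -> R) : R -> R -> R :=
  fun t x => Derive (fun s => u s x) t.
Definition dx (u : R -> R -> R) : R -> R -> R :=
  fun t x => Derive (fun y => u t y) x.

(* Iterated partial derivative along a word: true = d/dt, false = d/dx;
   the head of the list is applied last. *)
Fixpoint pd (w : list bool) (u : R -> R -> R) : R -> R -> R :=
  match w with
  | nil => u
  | b :: w' => if b then dt (pd w' u) else dx (pd w' u)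
  end.

Definition smooth2 (u : R -> R -> R) : Prop :=
  forall (w : list bool) (t x : R),
    ex_derive (fun s => pd w u s x) t /\
    ex_derive (fun y => pd w u t y) x /\
    continuity_2d_pt (pd w u) t x.

(* u is 1-periodic in x, i.e. a function on R x S^1 with S^1 = R/Z. *)
Definition periodic_x (u : R -> R -> R) : Prop :=
  forall t x, u t (x + 1) = u t x.

Definition mu (u : R -> R -> R) : R -> R :=
  fun t => RInt (fun x => u t x) 0 1.

Definition smooth1 (f : R -> R) : Prop :=
  forall (n : nat) (x : R), ex_derive (Derive_n f n) x.

Definition smoothC (f : R -> C) : Prop :=
  smooth1 (fun y => Re (f y)) /\ smooth1 (fun y => Im (f y)).

Definition dxC (psi : R -> R -> C) : R -> R -> C :=
  fun t x => (Derive (fun y => Re (psi t y)) x, Derive (fun y => Im (psi t y)) x).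

Definition Tflow (lam : C) (u : R -> R -> R) (psi : R -> R -> C) : R -> R -> C :=
  fun t x =>
    (- (/ lam) * dxC (dxC psi) t x
     - RtoC (u t x) * dxC psi t x
     + RtoC (dx u t x) * psi t x)%C.

(* Compatibility condition (psi_t)_xxx = (psi_xxx)_t of the Lax pair
     psi_xxx = - lambda m psi,   psi_t = T psi,
   for a given m: for every lambda <> 0 and every eigenfunction psi of the
   x-equation, computing (psi_t)_xxx with psi_t := T psi, and
   (psi_xxx)_t = (-lambda m psi)_t = -lambda m_t psi - lambda m psi_t
   with psi_t := T psi, gives the same result. *)
Definition lax_compatible (u m : R -> R -> R) : Prop :=
  forall lam : C, lam <> RtoC 0 ->
  forall psi : R -> R -> C,
    (forall t, smoothC (psi t)) ->
    (forall t x, dxC (dxC (dxC psi)) t x = (- lam * RtoC (m t x) * psi t x)%C) ->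
    forall t x,
      dxC (dxC (dxC (Tflow lam u psi))) t x =
      (- lam * RtoC (dt m t x) * psi t x
       - lam * RtoC (m t x) * Tflow lam u psi t x)%C.

Definition m_DP (u : R -> R -> R) : R -> R -> R :=
  fun t x => mu u t - dx (dx u) t x.
Definition m_B (u : R -> R -> R) : R -> R -> R :=
  fun t x => - dx (dx u) t x.

Definition muDP_eq (u : R -> R -> R) : Prop :=
  forall t x,
    mu (dt u) t - dx (dx (dt u)) t x + 3 * mu u t * dx u t x
    - 3 * dx u t x * dx (dx u) t x - u t x * dx (dx (dx u)) t x = 0.

Definition muB_eq (u : R -> R -> R) : Prop :=
  forall t x,
    - dx (dx (dt u)) t x - 3 * dx u t x * dx (dx u) t x
    - u t x * dx (dx (dx u)) t x = 0.

(* Main.v *)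
Require Import Defs.
From Stdlib Require Import Reals Lra Lia FunctionalExtensionality Arith List.
From Coquelicot Require Import Coquelicot.
Open Scope R_scope.

Fixpoint Ck (k : nat) (f : R -> R) : Prop :=
  match k with
  | O => True
  | S k => (forall x, ex_derive f x) /\ Ck k (Derive f)
  end.

Lemma Ck_ext k : forall f g, (forall x, f x = g x) -> Ck k f -> Ck k g.
Proof.
  induction k as [|k IH]; simpl; auto.
  intros f g H [H1 H2]; split.
  - intros x; apply (ex_derive_ext f); auto.
  - apply (IH (Derive f)); auto. intros x; apply Derive_ext; auto.
Qed.

Lemma Ck_mono k : forall f, Ck (S k) f -> Ck k f.
Proof.
  induction k as [|k IH]; simpl; auto.
  intros f [H1 H2]; split; auto.
Qed.

Lemma Ck_const k : forall c, Ck k (fun _ => c).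
Proof.
  induction k as [|k IH]; simpl; auto.
  intros c; split.
  - intros; apply ex_derive_const.
  - apply (Ck_ext k (fun _ => 0)). intros; rewrite Derive_const; auto. apply IH.
Qed.

Lemma Ck_plus k : forall f g, Ck k f -> Ck k g -> Ck k (fun y => f y + g y).
Proof.
  induction k as [|k IH]; simpl; auto.
  intros f g [F1 F2] [G1 G2]; split.
  - intros x; apply (ex_derive_plus f g); auto.
  - apply (Ck_ext k (fun y => Derive f y + Derive g y)).
    intros; rewrite Derive_plus; auto. apply IH; auto.
Qed.

Lemma Ck_opp k : forall f, Ck k f -> Ck k (fun y => - f y).
Proof.
  induction k as [|k IH]; simpl; auto.
  intros f [F1 F2]; split.
  - intros x; apply (ex_derive_opp f); auto.
  - apply (Ck_ext k (fun y => - Derive f y)).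
    intros; rewrite Derive_opp; auto. apply IH; auto.
Qed.

Lemma Ck_mult k : forall f g, Ck k f -> Ck k g -> Ck k (fun y => f y * g y).
Proof.
  induction k as [|k IH]; simpl; auto.
  intros f g HF HG.
  assert (HF' := Ck_mono k f HF). assert (HG' := Ck_mono k g HG).
  destruct HF as [F1 F2]; destruct HG as [G1 G2]; split.
  - intros x; apply ex_derive_mult; auto.
  - apply (Ck_ext k (fun y => Derive f y * g y + f y * Derive g y)).
    intros; rewrite Derive_mult; auto. apply Ck_plus; apply IH; auto.
Qed.

Lemma Derive_n_S f n x : Derive_n f (S n) x = Derive_n (Derive f) n x.
Proof.
  revert x; induction n as [|n IH]; intros x; simpl; auto.
  apply Derive_ext; intros; apply IH.
Qed.

Lemma Ck_sm_1 n : forall f, Ck (S n) f -> forall x, ex_derive (Derive_n f n) x.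
Proof.
  induction n as [|n IH]; intros f H x.
  - simpl in H; destruct H; auto.
  - destruct H as [H1 H2].
    apply (ex_derive_ext (Derive_n (Derive f) n)).
    + intros; symmetry; apply Derive_n_S.
    + apply IH; auto.
Qed.

Lemma sm_Ck k : forall f, smooth1 f -> Ck k f.
Proof.
  induction k as [|k IH]; simpl; auto.
  intros f H; split.
  - intros x; apply (H 0%nat).
  - apply IH. intros n x. apply (ex_derive_ext (Derive_n f (S n))).
    + intros; apply Derive_n_S.
    + apply H.
Qed.

Lemma Ck_sm f : (forall k, Ck k f) -> smooth1 f.
Proof. intros H n x; apply Ck_sm_1; auto. Qed.

Lemma sm_plus f g : smooth1 f -> smooth1 g -> smooth1 (fun y => f y + g y).
Proof. intros; apply Ck_sm; intros; apply Ck_plus; apply sm_Ck; auto. Qed.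
Lemma sm_mult f g : smooth1 f -> smooth1 g -> smooth1 (fun y => f y * g y).
Proof. intros; apply Ck_sm; intros; apply Ck_mult; apply sm_Ck; auto. Qed.
Lemma sm_opp f : smooth1 f -> smooth1 (fun y => - f y).
Proof. intros; apply Ck_sm; intros; apply Ck_opp; apply sm_Ck; auto. Qed.
Lemma sm_minus f g : smooth1 f -> smooth1 g -> smooth1 (fun y => f y - g y).
Proof. intros; unfold Rminus; apply sm_plus; auto; apply sm_opp; auto. Qed.
Lemma sm_const c : smooth1 (fun _ => c).
Proof. apply Ck_sm; intros; apply Ck_const. Qed.
Lemma sm_D f : smooth1 f -> smooth1 (Derive f).
Proof. intros H; apply Ck_sm; intros k. assert (H2 := sm_Ck (S k) f H). destruct H2; auto. Qed.
Lemma sm_ex f x : smooth1 f -> ex_derive f x.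
Proof. intros H; apply (H 0%nat). Qed.

Lemma Dplus f g : smooth1 f -> smooth1 g -> Derive (fun y => f y + g y) = fun y => Derive f y + Derive g y.
Proof. intros; apply functional_extensionality; intros; apply Derive_plus; apply sm_ex; auto. Qed.
Lemma Dminus f g : smooth1 f -> smooth1 g -> Derive (fun y => f y - g y) = fun y => Derive f y - Derive g y.
Proof. intros; apply functional_extensionality; intros; apply Derive_minus; apply sm_ex; auto. Qed.
Lemma Dmult f g : smooth1 f -> smooth1 g -> Derive (fun y => f y * g y) = fun y => Derive f y * g y + f y * Derive g y.
Proof. intros; apply functional_extensionality; intros; apply Derive_mult; apply sm_ex; auto. Qed.
Lemma Dopp f : Derive (fun y => - f y) = fun y => - Derive f y.
Proof. apply functional_extensionality; intros; apply Derive_opp. Qed.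
Lemma Dconst c : Derive (fun _ => c) = fun _ => 0.
Proof. apply functional_extensionality; intros; apply Derive_const. Qed.

Ltac smt := repeat match goal with
 | |- smooth1 (fun y => @?a y + @?b y) => apply sm_plus
 | |- smooth1 (fun y => @?a y - @?b y) => apply sm_minus
 | |- smooth1 (fun y => @?a y * @?b y) => apply sm_mult
 | |- smooth1 (fun y => - @?a y) => apply sm_opp
 | |- smooth1 (fun y => Derive _ y) => apply sm_D
 | |- smooth1 (Derive _) => apply sm_D
 | |- smooth1 _ => first [assumption | apply sm_const]
 end.

Ltac dcomp := repeat (first [rewrite Dplus by smt | rewrite Dminus by smt | rewrite Dmult by smt
   | rewrite Dconst | rewrite Dopp]; cbv beta).

Ltac rring := match goal with |- ?a = ?b => change (@eq R a b) end; ring.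
Ltac rfield := match goal with |- ?a = ?b => change (@eq R a b) end; field.
Ltac pgen := unfold Rminus in *; cbn [pow] in *; repeat match goal with
  |- context [?x ^ ?n] => lazymatch n with O => fail | S _ => fail | _ =>
       let P := fresh "P" in set (P := x ^ n) in * end end.

Definition dC1 (ps : R -> C) : R -> C :=
  fun y => (Derive (fun y => Re (ps y)) y, Derive (fun y => Im (ps y)) y).

Lemma core (p q U : R -> R) (K mt : R) (lam : C) (x : R) :
  smooth1 U -> smooth1 p -> smooth1 q -> lam <> RtoC 0 ->
  let ps := fun y => (p y, q y) : C in
  (forall y, dC1 (dC1 (dC1 ps)) y = (- lam * RtoC (K - Derive (Derive U) y) * ps y)%C) ->
  let Tf := fun y => (- (/ lam) * dC1 (dC1 ps) y - RtoC (U y) * dC1 ps y + RtoC (Derive U y) * ps y)%C in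
  dC1 (dC1 (dC1 Tf)) x = (- lam * RtoC mt * ps x - lam * RtoC (K - Derive (Derive U) x) * Tf x
      + lam * RtoC (mt + 3 * Derive U x * (K - Derive (Derive U) x) - U x * Derive (Derive (Derive U)) x) * ps x)%C.
Proof.
  intros HU Hp Hq Hl ps eig Tf.
  destruct lam as [lr li].
  assert (Hn : lr ^ 2 + li ^ 2 <> 0).
  { intros H. apply Hl. assert (lr = 0) by nra. assert (li = 0) by nra. subst; reflexivity. }
  assert (eigp : Derive (Derive (Derive p)) = fun y => (K - Derive (Derive U) y) * (li * q y - lr * p y)).
  { apply functional_extensionality; intros y. generalize (f_equal fst (eig y)). simpl. intros H; etransitivity; [exact H|]; ring. }
  assert (eigq : Derive (Derive (Derive q)) = fun y => - (K - Derive (Derive U) y) * (lr * q y + li * p y)).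
  { apply functional_extensionality; intros y. generalize (f_equal snd (eig y)). simpl. intros H; etransitivity; [exact H|]; ring. }
  assert (H1 : forall y, dC1 ps y = (Derive p y, Derive q y)) by reflexivity.
  assert (H2 : forall y, dC1 (dC1 ps) y = (Derive (Derive p) y, Derive (Derive q) y)) by reflexivity.
  set (c := lr / (lr ^ 2 + li ^ 2)). set (d := - li / (lr ^ 2 + li ^ 2)).
  assert (HTr : (fun y => Re (Tf y)) = fun y => (- c) * Derive (Derive p) y + d * Derive (Derive q) y - U y * Derive p y + Derive U y * p y).
  { apply functional_extensionality; intros y. unfold Tf. rewrite H1, H2. unfold ps. simpl. unfold c, d. field; contradict Hn; nra. }
  assert (HTi : (fun y => Im (Tf y)) = fun y => (- c) * Derive (Derive q) y - d * Derive (Derive p) y - U y * Derive q y + Derive U y * q y).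
  { apply functional_extensionality; intros y. unfold Tf. rewrite H1, H2. unfold ps. simpl. unfold c, d. field; contradict Hn; nra. }
  apply injective_projections.
  - change (Derive (Derive (Derive (fun y => Re (Tf y)))) x = Re (- (lr, li) * RtoC mt * ps x - (lr, li) * RtoC (K - Derive (Derive U) x) * Tf x
      + (lr, li) * RtoC (mt + 3 * Derive U x * (K - Derive (Derive U) x) - U x * Derive (Derive (Derive U)) x) * ps x)%C).
    rewrite HTr.
    dcomp.
    rewrite ?eigp, ?eigq. cbv beta. dcomp.
    unfold Tf. rewrite H1, H2. unfold ps. simpl. unfold c, d. field; contradict Hn; nra.
  - match goal with |- _ = ?r => change (Derive (Derive (Derive (fun y => Im (Tf y)))) x = r) end.
    rewrite HTi.
    dcomp.
    rewrite ?eigp, ?eigq. cbv beta. dcomp.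
    unfold Tf. rewrite H1, H2. unfold ps. simpl. unfold c, d. field; contradict Hn; nra.
Qed.

Lemma sm_pd u : smooth2 u -> forall w t, smooth1 (fun y => pd w u t y).
Proof.
  intros hu w t. apply Ck_sm. intros k. revert w.
  induction k as [|k IH]; simpl; auto.
  intros w; split.
  - intros x; apply (hu w t x).
  - apply (Ck_ext k (fun y => pd (false :: w) u t y)). { intros; reflexivity. } apply IH.
Qed.

Lemma loc2_all (P : R -> R -> Prop) x y : (forall a b, P a b) -> locally_2d P x y.
Proof. intros H. exists (mkposreal 1 Rlt_0_1). intros; apply H. Qed.

Lemma swap u : smooth2 u -> forall w t x, pd (true :: false :: w) u t x = pd (false :: true :: w) u t x.
Proof.
  intros hu w t x.
  change (Derive (fun z => Derive (fun t' => pd w u z t') x) t = Derive (fun z => Derive (fun t' => pd w u t' z) t) x).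
  apply Schwarz.
  - apply loc2_all. intros a b. split; [apply (hu w a b)|]. split; [apply (hu w a b)|].
    split; [apply (hu (false :: w) a b)| apply (hu (true :: w) a b)].
  - apply (hu (true :: false :: w) t x).
  - apply (hu (false :: true :: w) t x).
Qed.

Lemma dt_mu u : smooth2 u -> forall t, is_derive (mu u) t (mu (dt u) t).
Proof.
  intros hu t. unfold mu, dt.
  apply (is_derive_RInt_param (fun s y => u s y) 0 1 t).
  - apply filter_forall. intros s0 y _. apply (hu nil s0 y).
  - intros y _. apply (hu (true :: nil) t y).
  - apply filter_forall. intros s. apply (ex_RInt_continuous (V:=R_CompleteNormedModule)). intros z _.
    apply (ex_derive_continuous (K:=R_AbsRing) (V:=R_NormedModule)). apply (hu nil s z).
Qed.

Lemma dxxt u : smooth2 u -> forall t x, Derive (fun s => dx (dx u) s x) t = dx (dx (dt u)) t x.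
Proof.
  intros hu t x.
  change (pd (true :: false :: false :: nil) u t x = pd (false :: false :: true :: nil) u t x).
  rewrite swap by auto.
  change (Derive (fun y => pd (true :: false :: nil) u t y) x = Derive (fun y => pd (false :: true :: nil) u t y) x).
  apply Derive_ext. intros; apply swap; auto.
Qed.

Lemma dt_mDP u : smooth2 u -> forall t x, dt (m_DP u) t x = mu (dt u) t - dx (dx (dt u)) t x.
Proof.
  intros hu t x. unfold dt at 1, m_DP.
  rewrite Derive_minus.
  - rewrite (is_derive_unique _ _ _ (dt_mu u hu t)). rewrite dxxt; auto.
  - eexists; apply dt_mu; auto.
  - apply (hu (false :: false :: nil) t x).
Qed.

Lemma dt_mB u : smooth2 u -> forall t x, dt (m_B u) t x = - dx (dx (dt u)) t x.
Proof.
  intros hu t x. unfold dt at 1, m_B.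
  rewrite Derive_opp. rewrite dxxt; auto.
Qed.

Lemma cont_ex_RInt (g : R -> R) a b : (forall s, continuous g s) -> ex_RInt g a b.
Proof. intros H. apply (ex_RInt_continuous (V:=R_CompleteNormedModule)). intros; apply H. Qed.

Lemma ftc (g : R -> R) x0 : (forall s, continuous g s) ->
  forall x, is_derive (fun x => RInt g x0 x) x (g x).
Proof.
  intros H x. apply (is_derive_RInt (V:=R_CompleteNormedModule) g (fun b => RInt g x0 b) x0 x).
  - apply filter_forall. intros b. apply (RInt_correct (V:=R_CompleteNormedModule)). apply cont_ex_RInt; auto.
  - apply H.
Qed.

Lemma der_cont (f : R -> R) df x : is_derive f x df -> continuous f x.
Proof. intros H. apply (ex_derive_continuous (K:=R_AbsRing) (V:=R_NormedModule)). eexists; eauto. Qed.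

Lemma poly_cont C x0 k s : continuous (fun s => C * (s - x0) ^ k) s.
Proof. apply (der_cont _ (C * (INR k * (s - x0) ^ pred k))). auto_derive; auto. pgen; rring. Qed.
Lemma poly_cont2 C x0 k s : continuous (fun s => C * (x0 - s) ^ k) s.
Proof. apply (der_cont _ (C * (INR k * (x0 - s) ^ pred k * (-1)))). auto_derive; auto. pgen; rring. Qed.

Lemma RInt_bound (g : R -> R) x0 x C k : (forall s, continuous g s) -> 0 <= C ->
  (forall s, Rmin x0 x <= s <= Rmax x0 x -> Rabs (g s) <= C * Rabs (s - x0) ^ k) ->
  Rabs (RInt g x0 x) <= C * Rabs (x - x0) ^ (S k) / INR (S k).
Proof.
  intros Hc HC Hb.
  assert (HS : 0 < INR (S k)) by (apply lt_0_INR; lia).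
  remember (INR (S k)) as N eqn:HN.
  destruct (Rle_or_lt x0 x) as [Hle|Hlt].
  - rewrite (Rabs_right (x - x0)) by lra.
    apply (norm_RInt_le (V:=R_NormedModule) g (fun s => C * (s - x0) ^ k) x0 x _ _ Hle).
    + intros s Hs. specialize (Hb s). rewrite Rmin_left, Rmax_right in Hb by lra.
      rewrite <- (Rabs_right (s - x0)) by lra. apply Hb; lra.
    + apply (RInt_correct (V:=R_CompleteNormedModule)). apply cont_ex_RInt; auto.
    + replace (C * (x - x0) ^ S k / N) with (minus (C * (x - x0) ^ S k / N) (C * (x0 - x0) ^ S k / N)).
      2:{ unfold minus, plus, opp; simpl. replace (x0 - x0) with 0 by ring. pgen; rfield. lra. }
      apply (is_RInt_derive (V:=R_CompleteNormedModule) (fun s => C * (s - x0) ^ S k / N)).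
      * intros s _. auto_derive; auto. replace (match k with 0%nat => 1 | S _ => INR k + 1 end) with N by (rewrite HN; reflexivity). pgen; rfield. lra.
      * intros; apply poly_cont.
  - rewrite (Rabs_left (x - x0)) by lra.
    rewrite <- (opp_RInt_swap (V:=R_CompleteNormedModule)) by (apply cont_ex_RInt; auto).
    change (Rabs (- RInt g x x0) <= C * (- (x - x0)) ^ S k / N).
    rewrite Rabs_Ropp.
    apply (norm_RInt_le (V:=R_NormedModule) g (fun s => C * (x0 - s) ^ k) x x0 _ _ (Rlt_le _ _ Hlt)).
    + intros s Hs. specialize (Hb s). rewrite Rmin_right, Rmax_left in Hb by lra.
      rewrite (Rabs_left1 (s - x0)) in Hb by lra. replace (- (s - x0)) with (x0 - s) in Hb by ring.
      apply Hb; lra.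
    + apply (RInt_correct (V:=R_CompleteNormedModule)). apply cont_ex_RInt; auto.
    + replace (C * (- (x - x0)) ^ S k / N) with (minus (- C * (x0 - x0) ^ S k / N) (- C * (x0 - x) ^ S k / N)).
      2:{ unfold minus, plus, opp; simpl. replace (x0 - x0) with 0 by ring. replace (- (x - x0)) with (x0 - x) by ring. pgen; rfield. lra. }
      apply (is_RInt_derive (V:=R_CompleteNormedModule) (fun s => - C * (x0 - s) ^ S k / N)).
      * intros s _. auto_derive; auto. replace (match k with 0%nat => 1 | S _ => INR k + 1 end) with N by (rewrite HN; reflexivity). pgen; rfield. lra.
      * intros; apply poly_cont2.
Qed.

Lemma Mtest (h : nat -> R -> R) (c : nat -> R) (D : R -> Prop) :
  ex_series c -> (forall k y, D y -> Rabs (h k y) <= c k) ->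
  CVU_dom (fun n y => sum_n (fun k => h k y) n) D.
Proof.
  intros Hc Hb. apply CVU_dom_cauchy. intros eps.
  destruct (Cauchy_ex_series c Hc eps) as [N HN].
  exists N. intros n m y Dy Hn Hm.
  assert (key : forall n m, (N <= n)%nat -> (N <= m)%nat -> (m < n)%nat ->
     Rabs (sum_n (fun k => h k y) n - sum_n (fun k => h k y) m) < eps).
  { clear n m Hn Hm. intros n m Hn Hm Hlt.
    assert (E := sum_n_m_sum_n (G:=R_AbelianGroup) (fun k => h k y) m n ltac:(lia)).
    replace (sum_n (fun k => h k y) n - sum_n (fun k => h k y) m) with (sum_n_m (fun k => h k y) (S m) n) by (exact E).
    eapply Rle_lt_trans. apply (norm_sum_n_m (K:=R_AbsRing) (V:=R_NormedModule)).
    eapply Rle_lt_trans. apply sum_n_m_le. intros k. apply (Hb k y Dy).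
    eapply Rle_lt_trans. apply Rle_abs. apply (HN (S m) n); lia. }
  destruct (Nat.lt_trichotomy m n) as [H|[H|H]].
  - apply key; auto.
  - subst. replace (_ - _) with 0 by ring. rewrite Rabs_R0. apply cond_pos.
  - rewrite Rabs_minus_sym. apply key; auto.
Qed.

Lemma der_sum (f g : nat -> R -> R) : (forall k y, is_derive (f k) y (g k y)) ->
  forall n y, is_derive (fun y => sum_n (fun k => f k y) n) y (sum_n (fun k => g k y) n).
Proof.
  intros H n. induction n as [|n IH]; intros y.
  - apply (is_derive_ext (f 0%nat)). { intros; rewrite sum_O; auto. } rewrite sum_O. apply H.
  - apply (is_derive_ext (fun y => plus (sum_n (fun k => f k y) n) (f (S n) y))).
    { intros; rewrite sum_Sn; auto. } rewrite sum_Sn. apply (is_derive_plus (K:=R_AbsRing) (V:=R_NormedModule)); auto.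
Qed.

Lemma cont_sum (g : nat -> R -> R) : (forall k y, continuous (g k) y) ->
  forall n y, continuous (fun y => sum_n (fun k => g k y) n) y.
Proof.
  intros H n. induction n as [|n IH]; intros y.
  - apply (continuous_ext (g 0%nat)). { intros; rewrite sum_O; reflexivity. } apply H.
  - apply (continuous_ext (fun y => plus (sum_n (fun k => g k y) n) (g (S n) y))). { intros; rewrite sum_Sn; reflexivity. }
    apply (continuous_plus (K:=R_AbsRing) (V:=R_NormedModule)); auto.
Qed.

Lemma series_der (f g : nat -> R -> R) (D : R -> Prop) (cf cg : nat -> R) :
  open D -> is_connected D ->
  (forall k y, is_derive (f k) y (g k y)) ->
  (forall k y, continuous (g k) y) ->
  ex_series cf -> ex_series cg ->
  (forall k y, D y -> Rabs (f k y) <= cf k) ->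
  (forall k y, D y -> Rabs (g k y) <= cg k) ->
  forall x, D x -> is_derive (fun y => Series (fun k => f k y)) x (Series (fun k => g k x)).
Proof.
  intros HO HC Hd Hgc Hcf Hcg Hbf Hbg x Dx.
  assert (Hds : forall n y, Derive (fun y => sum_n (fun k => f k y) n) y = sum_n (fun k => g k y) n).
  { intros; apply is_derive_unique; apply der_sum; auto. }
  assert (HdsF : (fun n y => Derive (fun y => sum_n (fun k => f k y) n) y) = (fun n y => sum_n (fun k => g k y) n)).
  { apply functional_extensionality; intros n; apply functional_extensionality; intros y; apply Hds. }
  replace (Series (fun k => g k x)) with (real (Lim_seq (fun n => Derive (fun y => sum_n (fun k => f k y) n) x))).
  2:{ unfold Series. rewrite (Lim_seq_ext _ _ (fun n => Hds n x)). reflexivity. }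
  apply (CVU_Derive (fun n y => sum_n (fun k => f k y) n) D HO HC).
  - apply (Mtest f cf D); auto.
  - intros n y _. eexists; apply der_sum; eauto.
  - intros n y _. apply continuity_pt_filterlim.
    apply (continuous_ext (fun y => sum_n (fun k => g k y) n)). { intros z; symmetry; apply Hds. } apply cont_sum; auto.
  - rewrite HdsF. apply (Mtest g cg D); auto.
  - auto.
Qed.

Fixpoint F (a : R -> R) (x0 : R) (k : nat) : nat -> R -> R :=
  match k with
  | O => fun i _ => match i with O => 1 | _ => 0 end
  | S k => fun i x => RInt (fun s => match i with O => F a x0 k 1%nat s | 1%nat => F a x0 k 2%nat s
                                     | _ => a s * F a x0 k 0%nat s end) x0 x
  end.

Definition G a x0 k i s := match i with O => F a x0 k 1%nat s | 1%nat => F a x0 k 2%nat s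
   | _ => a s * F a x0 k 0%nat s end.

Lemma F_S a x0 k i x : F a x0 (S k) i x = RInt (G a x0 k i) x0 x.
Proof. reflexivity. Qed.


Lemma FG_cont (a : R -> R) (x0 : R) (ac : forall s, continuous a s) k : (forall i x, continuous (F a x0 k i) x) /\ (forall i x, continuous (G a x0 k i) x).
Proof.
  induction k as [|k IH].
  - assert (H0 : forall i x, continuous (F a x0 0 i) x).
    { intros i x; destruct i; simpl; apply continuous_const. }
    split; auto. intros [|[|i]] x; unfold G; auto.
    apply (continuous_mult (K:=R_AbsRing)); auto.
  - destruct IH as [IH1 IH2].
    assert (H0 : forall i x, continuous (F a x0 (S k) i) x).
    { intros i x. apply (der_cont _ (G a x0 k i x)).
      apply (is_derive_ext (fun x => RInt (G a x0 k i) x0 x)). { intros; reflexivity. }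
      apply ftc; auto. }
    split; auto. intros [|[|i]] x; unfold G; auto.
    apply (continuous_mult (K:=R_AbsRing)); auto.
Qed.

Lemma F_der (a : R -> R) (x0 : R) (ac : forall s, continuous a s) k i x : is_derive (F a x0 (S k) i) x (G a x0 k i x).
Proof.
  apply (is_derive_ext (fun x => RInt (G a x0 k i) x0 x)). { intros; reflexivity. }
  apply ftc; apply FG_cont; auto.
Qed.


Lemma between_abs (x0 : R) s x : Rmin x0 x <= s <= Rmax x0 x -> Rabs (s - x0) <= Rabs (x - x0).
Proof. unfold Rmin, Rmax; destruct (Rle_dec x0 x); intros; unfold Rabs; repeat destruct Rcase_abs; lra. Qed.

Lemma F_bound (a : R -> R) (x0 : R) (ac : forall s, continuous a s) (r M : R) (HM1 : 1 <= M) (HMa : forall s, Rabs (s - x0) <= r -> Rabs (a s) <= M) k : forall i x, Rabs (x - x0) <= r -> Rabs (F a x0 k i x) <= (M * Rabs (x - x0)) ^ k / INR (Factorial.fact k).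
Proof.
  induction k as [|k IH]; intros i x Hx.
  - destruct i; simpl; rewrite ?Rabs_R1, ?Rabs_R0; lra.
  - assert (Hf : 0 < INR (Factorial.fact k)) by (apply lt_0_INR, lt_O_fact).
    assert (HG : forall s, Rabs (s - x0) <= r -> Rabs (G a x0 k i s) <= M ^ S k / INR (Factorial.fact k) * Rabs (s - x0) ^ k).
    { intros s Hs.
      assert (Hb : forall j, Rabs (F a x0 k j s) <= M ^ k / INR (Factorial.fact k) * Rabs (s - x0) ^ k).
      { intros j. eapply Rle_trans. apply IH; auto. rewrite Rpow_mult_distr. right; field. lra. }
      assert (Hp : 0 <= M ^ k / INR (Factorial.fact k) * Rabs (s - x0) ^ k).
      { apply Rmult_le_pos. apply Rmult_le_pos. apply pow_le; lra. left; apply Rinv_0_lt_compat; auto.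
        apply pow_le, Rabs_pos. }
      assert (E : M ^ S k / INR (Factorial.fact k) * Rabs (s - x0) ^ k = M * (M ^ k / INR (Factorial.fact k) * Rabs (s - x0) ^ k)).
      { simpl. field. lra. }
      rewrite E.
      destruct i as [|[|i]]; unfold G.
      - eapply Rle_trans. apply Hb. nra.
      - eapply Rle_trans. apply Hb. nra.
      - rewrite Rabs_mult. apply Rmult_le_compat; auto using Rabs_pos. }
    rewrite F_S. eapply Rle_trans. apply (RInt_bound _ x0 x (M ^ S k / INR (Factorial.fact k)) k).
    + apply FG_cont; auto.
    + apply Rmult_le_pos. apply pow_le; lra. left; apply Rinv_0_lt_compat; auto.
    + intros s Hs. apply HG. eapply Rle_trans. apply between_abs; eauto. auto.
    + right. rewrite fact_simpl, mult_INR, Rpow_mult_distr.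
      assert (0 < INR (S k)) by (apply lt_0_INR; lia).
      field. lra.
Qed.

Lemma G_bound (a : R -> R) (x0 : R) (ac : forall s, continuous a s) (r M : R) (HM1 : 1 <= M) (HMa : forall s, Rabs (s - x0) <= r -> Rabs (a s) <= M) k i x : Rabs (x - x0) <= r -> Rabs (G a x0 k i x) <= M * ((M * Rabs (x - x0)) ^ k / INR (Factorial.fact k)).
Proof.
  intros Hx. assert (Hp : 0 <= (M * Rabs (x - x0)) ^ k / INR (Factorial.fact k)).
  { apply Rmult_le_pos. apply pow_le. apply Rmult_le_pos; [lra|apply Rabs_pos].
    left; apply Rinv_0_lt_compat, lt_0_INR, lt_O_fact. }
  destruct i as [|[|i]]; unfold G.
  - eapply Rle_trans. apply (F_bound a x0 ac r M HM1 HMa); auto. nra.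
  - eapply Rle_trans. apply (F_bound a x0 ac r M HM1 HMa); auto. nra.
  - rewrite Rabs_mult. apply Rmult_le_compat; auto using Rabs_pos. apply (F_bound a x0 ac r M HM1 HMa); auto.
Qed.


Lemma ex_cf (z : R) : ex_series (fun k => z ^ k / INR (Factorial.fact k)).
Proof.
  exists (exp z). eapply is_series_ext; [|apply (is_exp_Reals z)].
  intros n. simpl. rewrite pow_n_pow. reflexivity.
Qed.

Lemma fact_mono A B k : 0 <= A <= B -> A ^ k / INR (Factorial.fact k) <= B ^ k / INR (Factorial.fact k).
Proof.
  intros H. apply Rmult_le_compat_r. left; apply Rinv_0_lt_compat, lt_0_INR, lt_O_fact.
  apply pow_incr; auto.
Qed.

Lemma Y_der (a : R -> R) x0 : smooth1 a -> forall i x,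
  is_derive (fun y => Series (fun k => F a x0 k i y)) x (Series (fun k => G a x0 k i x)).
Proof.
  intros Ha i x.
  assert (ac : forall s, continuous a s).
  { intros s. apply (ex_derive_continuous (K:=R_AbsRing) (V:=R_NormedModule)). apply (Ha 0%nat). }
  set (r := Rabs (x - x0) + 1).
  assert (Hr : 0 < r) by (unfold r; generalize (Rabs_pos (x - x0)); lra).
  destruct (continuity_ab_maj (fun s => Rabs (a s)) (x0 - r) (x0 + r)) as [Mx [HMx _]].
  { lra. }
  { intros c _. apply (continuity_pt_comp a Rabs). apply continuity_pt_filterlim; apply ac.
    apply Rcontinuity_abs. }
  set (M := Rmax 1 (Rabs (a Mx))).
  assert (HM1 : 1 <= M) by apply Rmax_l.
  assert (HMa : forall s, Rabs (s - x0) <= r -> Rabs (a s) <= M).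
  { intros s Hs. eapply Rle_trans; [|apply Rmax_r]. apply HMx.
    revert Hs; unfold Rabs; destruct Rcase_abs; intros; lra. }
  set (g := fun k y => match k with O => 0 | S k => G a x0 k i y end).
  assert (HS : Series (fun k => g k x) = Series (fun k => G a x0 k i x)).
  { apply Series_incr_1_aux; reflexivity. }
  rewrite <- HS.
  set (cf := fun k => (M * r) ^ k / INR (Factorial.fact k)).
  apply (series_der (fun k => F a x0 k i) g (fun y => x0 - r < y /\ y < x0 + r) cf
           (fun k => match k with O => 0 | S k => M * cf k end)).
  - apply open_and; [apply open_gt | apply open_lt].
  - intros a0 b0 z [? ?] [? ?] [? ?]; split; lra.
  - intros [|k] y.
    + destruct i; simpl; apply (is_derive_const (K:=R_AbsRing) (V:=R_NormedModule)).
    + apply F_der; auto.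
  - intros [|k] y.
    + apply continuous_const.
    + apply FG_cont; auto.
  - apply ex_cf.
  - apply ex_series_incr_1. apply (ex_series_scal_l (K:=R_AbsRing) (V:=R_NormedModule) M cf). apply ex_cf.
  - intros k y Dy. assert (Hy : Rabs (y - x0) <= r) by (apply Rabs_le; lra).
    eapply Rle_trans. apply (F_bound a x0 ac r M HM1 HMa k i y Hy).
    apply fact_mono. split. apply Rmult_le_pos; [lra|apply Rabs_pos]. apply Rmult_le_compat_l; lra.
  - intros [|k] y Dy.
    + simpl. rewrite Rabs_R0. lra.
    + assert (Hy : Rabs (y - x0) <= r) by (apply Rabs_le; lra).
      eapply Rle_trans. apply (G_bound a x0 ac r M HM1 HMa k i y Hy).
      apply Rmult_le_compat_l. lra.
      apply fact_mono. split. apply Rmult_le_pos; [lra|apply Rabs_pos]. apply Rmult_le_compat_l; lra.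
  - unfold r. split; generalize (Rabs_pos (x - x0)); intros; unfold Rabs in *; destruct Rcase_abs; lra.
Qed.

Lemma ode3 (a : R -> R) x0 : smooth1 a ->
  exists y, smooth1 y /\ y x0 = 1 /\ forall x, Derive (Derive (Derive y)) x = a x * y x.
Proof.
  intros Ha.
  set (Y := fun i y => Series (fun k => F a x0 k i y)).
  assert (D0 : forall x, Derive (Y 0%nat) x = Y 1%nat x).
  { intros x. etransitivity; [apply is_derive_unique, Y_der; auto | reflexivity]. }
  assert (D1 : forall x, Derive (Y 1%nat) x = Y 2%nat x).
  { intros x. etransitivity; [apply is_derive_unique, Y_der; auto | reflexivity]. }
  assert (D2 : forall x, Derive (Y 2%nat) x = a x * Y 0%nat x).
  { intros x. etransitivity; [apply is_derive_unique, Y_der; auto |].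
    unfold Y. rewrite <- Series_scal_l. reflexivity. }
  exists (Y 0%nat). split; [|split].
  - apply Ck_sm. intros k.
    assert (H : Ck k (Y 0%nat) /\ Ck k (Y 1%nat) /\ Ck k (Y 2%nat)).
    { induction k as [|k [IH0 [IH1 IH2]]]; simpl; auto.
      split; [|split]; split.
      - intros x; eexists; apply Y_der; auto.
      - apply (Ck_ext k (Y 1%nat)); auto.
      - intros x; eexists; apply Y_der; auto.
      - apply (Ck_ext k (Y 2%nat)); auto.
      - intros x; eexists; apply Y_der; auto.
      - apply (Ck_ext k (fun x => a x * Y 0%nat x)); auto. apply Ck_mult; auto. apply sm_Ck; auto. }
    tauto.
  - unfold Y. rewrite (Series_ext _ (fun k => match k with O => 1 | S _ => 0 end)).
    + unfold Series. rewrite (Lim_seq_ext _ (fun _ => 1)). rewrite Lim_seq_const. reflexivity.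
      intros n. induction n as [|n IH]. rewrite sum_O; reflexivity.
      rewrite sum_Sn, IH. simpl. unfold plus; simpl. ring.
    + intros [|n]. reflexivity. rewrite F_S. apply (RInt_point (V:=R_CompleteNormedModule)).
  - intros x.
    rewrite (functional_extensionality _ _ D0), (functional_extensionality _ _ D1), (functional_extensionality _ _ D2).
    reflexivity.
Qed.

Definition Eterm (u : R -> R -> R) (K : R -> R) (m : R -> R -> R) t x :=
  dt m t x + 3 * dx u t x * (K t - dx (dx u) t x) - u t x * dx (dx (dx u)) t x.

Lemma compat_pt u K m : smooth2 u -> (forall t y, m t y = K t - dx (dx u) t y) ->
  forall lam : C, lam <> RtoC 0 ->
  forall psi : R -> R -> C,
    (forall t, smoothC (psi t)) ->
    (forall t x, dxC (dxC (dxC psi)) t x = (- lam * RtoC (m t x) * psi t x)%C) ->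
    forall t x,
      dxC (dxC (dxC (Tflow lam u psi))) t x =
      (- lam * RtoC (dt m t x) * psi t x
       - lam * RtoC (m t x) * Tflow lam u psi t x + lam * RtoC (Eterm u K m t x) * psi t x)%C.
Proof.
  intros hu Hm lam Hl psi Hsm Heig t x.
  assert (HU : smooth1 (u t)) by exact (sm_pd u hu nil t).
  destruct (Hsm t) as [Hp Hq].
  assert (Hps : psi t = fun y => (Re (psi t y), Im (psi t y))).
  { apply functional_extensionality; intros y; destruct (psi t y); reflexivity. }
  pose proof (core (fun y => Re (psi t y)) (fun y => Im (psi t y)) (u t) (K t) (dt m t x) lam x HU Hp Hq Hl) as HC.
  cbv zeta in HC.
  assert (Heig' : forall y, dC1 (dC1 (dC1 (fun y => (Re (psi t y), Im (psi t y))))) y =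
     (- lam * RtoC (K t - Derive (Derive (u t)) y) * (Re (psi t y), Im (psi t y)))%C).
  { intros y. rewrite <- Hps. etransitivity; [exact (Heig t y)|]. rewrite Hm. destruct (psi t y); reflexivity. }
  specialize (HC Heig').
  change (dC1 (dC1 (dC1 (fun y => (- (/ lam) * dC1 (dC1 (psi t)) y - RtoC (u t y) * dC1 (psi t) y + RtoC (dx u t y) * psi t y)%C))) x
    = (- lam * RtoC (dt m t x) * psi t x - lam * RtoC (m t x) * (- (/ lam) * dC1 (dC1 (psi t)) x - RtoC (u t x) * dC1 (psi t) x + RtoC (dx u t x) * psi t x) + lam * RtoC (Eterm u K m t x) * psi t x)%C).
  rewrite Hm. rewrite Hps.
  etransitivity; [exact HC|]. reflexivity.
Qed.

Lemma D3_zero x : Derive (fun y0 => Derive (fun y1 => Derive (fun _ : R => 0) y1) y0) x = 0.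
Proof.
  transitivity (Derive (fun _ => 0) x).
  - apply Derive_ext; intros y0. transitivity (Derive (fun _ => 0) y0).
    + apply Derive_ext; intros; apply Derive_const.
    + apply Derive_const.
  - apply Derive_const.
Qed.

Lemma compat_iff u K m : smooth2 u -> (forall t y, m t y = K t - dx (dx u) t y) ->
  (lax_compatible u m <-> forall t x, Eterm u K m t x = 0).
Proof.
  intros hu Hm. split.
  - intros Hc t0 x0.
    assert (Ha : smooth1 (fun s => - (K t0 - dx (dx u) t0 s))).
    { assert (H2 := sm_pd u hu (false :: false :: nil) t0). simpl in H2. smt. }
    destruct (ode3 _ x0 Ha) as [y [Hy [Hy0 Hy3]]].
    assert (H1 : RtoC 1 <> RtoC 0).
    { intros H. injection H. apply R1_neq_R0. }
    assert (Hsm : forall t, smoothC (fun x => if Req_EM_T t t0 then RtoC (y x) else RtoC 0)).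
    { intros t. destruct (Req_EM_T t t0); split; simpl; auto; apply sm_const. }
    assert (Heig : forall t x, dxC (dxC (dxC (fun t x => if Req_EM_T t t0 then RtoC (y x) else RtoC 0))) t x =
       (- RtoC 1 * RtoC (m t x) * (if Req_EM_T t t0 then RtoC (y x) else RtoC 0))%C).
    { intros t x. unfold dxC. cbv beta. destruct (Req_EM_T t t0).
      - subst t. rewrite Hm. apply injective_projections; simpl.
        + etransitivity; [exact (Hy3 x)|]. ring.
        + rewrite D3_zero. ring.
      - apply injective_projections; simpl.
        + rewrite D3_zero. ring.
        + rewrite D3_zero. ring. }
    pose proof (compat_pt u K m hu Hm (RtoC 1) H1 _ Hsm Heig t0 x0) as HP.
    rewrite (Hc (RtoC 1) H1 _ Hsm Heig t0 x0) in HP.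
    revert HP. destruct (Req_EM_T t0 t0) as [_|n]; [|exfalso; auto]. intros HP.
    rewrite Hy0 in HP.
    apply (f_equal fst) in HP. simpl in HP. lra.
  - intros HE lam Hl psi Hsm Heig t x.
    rewrite (compat_pt u K m hu Hm lam Hl psi Hsm Heig t x), HE.
    assert (Z : forall a b : C, (a + lam * RtoC 0 * b)%C = a).
    { intros [a1 a2] [b1 b2]; destruct lam as [l1 l2]; apply injective_projections; simpl; ring. }
    apply Z.
Qed.

Theorem theorem3p1 (u : R -> R -> R) (hu : smooth2 u) (hper : periodic_x u) :
  (lax_compatible u (m_DP u) <-> muDP_eq u) /\
  (lax_compatible u (m_B u) <-> muB_eq u).
Proof.
  split.
  - rewrite (compat_iff u (mu u) (m_DP u) hu (fun t y => eq_refl)).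
    unfold muDP_eq, Eterm. split; intros H t x; specialize (H t x); rewrite dt_mDP in * by auto.
    + match goal with H : ?a = 0 |- ?b = 0 => replace b with a by ring; exact H end.
    + match goal with H : ?a = 0 |- ?b = 0 => replace b with a by ring; exact H end.
  - rewrite (compat_iff u (fun _ => 0) (m_B u) hu).
    2:{ intros; unfold m_B; ring. }
    unfold muB_eq, Eterm. split; intros H t x; specialize (H t x); rewrite dt_mB in * by auto.
    + match goal with H : ?a = 0 |- ?b = 0 => replace b with a by ring; exact H end.
    + match goal with H : ?a = 0 |- ?b = 0 => replace b with a by ring; exact H end.
Qed.
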